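(* Let $H$ be a GCD-monoid. Let $a,c\in H$ and $b,d\in\mathrm{Sqf}\,H$ be such that $a$ and $b$ are relatively prime, $c$ and $d$ are relatively prime, and there exist $e,f\in\mathrm{Sqf}\,H$ and $m,n\in\mathbb{N}$ with $e^2\mid a$, $a\mid e^m$, $f^2\mid c$, $c\mid f^n$. If $ab\sim cd$, then $a\sim c$ and $b\sim d$.
   Context: A monoid means a commutative cancellative monoid (written multiplicatively); $H^{\ast}$ is its unit group, $\mathbb{N}=\{1,2,\dots\}$. $x\sim y$ means $x=uy$ with $u\in H^{\ast}$. Elements are relatively prime if all their common divisors are units. $\mathrm{Sqf}\,H$ is the set of elements not of the form $b^2c$ with $b,c\in H$, $b\notin H^{\ast}$. $H$ is a GCD-monoid if any two elements of $H$ have a greatest common divisor. *)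

(* Defs.v *)
From Stdlib Require Import Arith.

Record CCMonoid := {
  carrier :> Type;
  mop : carrier -> carrier -> carrier;
  mone : carrier;
  mop_assoc : forall x y z, mop x (mop y z) = mop (mop x y) z;
  mop_comm : forall x y, mop x y = mop y x;
  mop_one : forall x, mop mone x = x;
  mop_cancel : forall x y z, mop x y = mop x z -> y = z
}.

Section Defs.
Variable H : CCMonoid.

Definition is_unit (u : H) : Prop := exists v : H, mop H u v = mone H.

Definition mdvd (a b : H) : Prop := exists c : H, b = mop H a c.

Definition massoc (x y : H) : Prop := exists u : H, is_unit u /\ x = mop H u y.

Definition rel_prime (x y : H) : Prop :=
  forall d : H, mdvd d x -> mdvd d y -> is_unit d.

Definition squarefree (x : H) : Prop :=
  ~ exists b c : H, ~ is_unit b /\ x = mop H (mop H b b) c.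

Definition is_gcd (g x y : H) : Prop :=
  mdvd g x /\ mdvd g y /\ forall d : H, mdvd d x -> mdvd d y -> mdvd d g.

Definition gcd_monoid : Prop := forall x y : H, exists g : H, is_gcd g x y.

Fixpoint mpow (x : H) (n : nat) : H :=
  match n with
  | O => mone H
  | S k => mop H x (mpow x k)
  end.

End Defs.

Arguments is_unit {H} u.
Arguments mdvd {H} a b.
Arguments massoc {H} x y.
Arguments rel_prime {H} x y.
Arguments squarefree {H} x.
Arguments is_gcd {H} g x y.
Arguments mpow {H} x n.

(* Main.v *)
Require Import Defs.
From Stdlib Require Import Classical.

Lemma op1r (H : CCMonoid) (x : H) : mop H x (mone H) = x.
Proof. rewrite mop_comm; apply mop_one. Qed.

Lemma dvd_refl (H : CCMonoid) (x : H) : mdvd x x.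
Proof. exists (mone H); now rewrite op1r. Qed.

Lemma dvd_trans (H : CCMonoid) (x y z : H) : mdvd x y -> mdvd y z -> mdvd x z.
Proof. intros [k ->] [l ->]. exists (mop H k l). now rewrite mop_assoc. Qed.

Lemma dvd_mull (H : CCMonoid) (x y z : H) : mdvd x y -> mdvd x (mop H z y).
Proof. intros [k ->]. exists (mop H z k). rewrite !mop_assoc. f_equal. apply mop_comm. Qed.

Lemma dvd_mulr (H : CCMonoid) (x y z : H) : mdvd x y -> mdvd x (mop H y z).
Proof. intros D. rewrite mop_comm. now apply dvd_mull. Qed.

Lemma dvd_mul2 (H : CCMonoid) (x y z w : H) : mdvd x y -> mdvd z w -> mdvd (mop H x z) (mop H y w).
Proof. intros [k ->] [l ->]. exists (mop H k l).
  rewrite !mop_assoc. f_equal. rewrite <- !mop_assoc. f_equal. apply mop_comm. Qed.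

Lemma unit_mul (H : CCMonoid) (u v : H) : is_unit u -> is_unit v -> is_unit (mop H u v).
Proof. intros [u' Hu] [v' Hv]. exists (mop H u' v').
  rewrite mop_assoc. rewrite <- (mop_assoc H u v u'). rewrite (mop_comm H v u').
  rewrite mop_assoc, Hu, mop_one. exact Hv. Qed.

Lemma dvd_unit (H : CCMonoid) (x u : H) : mdvd x u -> is_unit u -> is_unit x.
Proof. intros [k ->] [w Hw]. exists (mop H k w). now rewrite mop_assoc. Qed.

Lemma dvd_unit_r (H : CCMonoid) (x y u : H) : mdvd x (mop H y u) -> is_unit u -> mdvd x y.
Proof. intros D [w Hw]. apply (dvd_trans _ _ _ _ (dvd_mulr _ _ _ w D)).
  exists (mone H). rewrite <- (mop_assoc H y u w), Hw, !op1r. reflexivity. Qed.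

Lemma dvd_cancel (H : CCMonoid) (z h x : H) : mdvd (mop H z h) (mop H z x) -> mdvd h x.
Proof. intros [k E]. exists k. apply (mop_cancel H z). rewrite mop_assoc. exact E. Qed.

Lemma rel_prime_sym (H : CCMonoid) (x y : H) : rel_prime x y -> rel_prime y x.
Proof. intros R d D1 D2. now apply R. Qed.

Lemma euclid (H : CCMonoid) (HG : gcd_monoid H) (x y z : H) :
  rel_prime x y -> mdvd x (mop H y z) -> mdvd x z.
Proof.
  intros R D.
  destruct (HG (mop H x z) (mop H y z)) as [g [G1 [G2 G3]]].
  assert (Zg : mdvd z g).
  { apply G3; apply dvd_mull, dvd_refl. }
  destruct Zg as [h ->].
  assert (Hh : is_unit h).
  { apply R.
    - apply (dvd_cancel H z). rewrite (mop_comm H z x). exact G1.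
    - apply (dvd_cancel H z). rewrite (mop_comm H z y). exact G2. }
  apply (dvd_unit_r _ _ _ h); [| exact Hh].
  apply G3; [apply dvd_mulr, dvd_refl | exact D].
Qed.

Lemma coprime_mul (H : CCMonoid) (HG : gcd_monoid H) (x y c : H) :
  rel_prime x c -> rel_prime y c -> rel_prime (mop H x y) c.
Proof.
  intros Rx Ry t D1 D2.
  destruct (HG t x) as [g [G1 [G2 G3]]].
  assert (Ug : is_unit g) by (apply Rx; [exact G2 | exact (dvd_trans _ _ _ _ G1 D2)]).
  assert (Rt : rel_prime t x).
  { intros s S1 S2. apply (dvd_unit _ _ g); [apply G3; assumption | exact Ug]. }
  apply Ry; [ | exact D2]. exact (euclid H HG t x y Rt D1).
Qed.

Lemma coprime_pow (H : CCMonoid) (HG : gcd_monoid H) (x c : H) (m : nat) :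
  rel_prime x c -> rel_prime (mpow x m) c.
Proof.
  intros R. induction m as [|m IH]; simpl.
  - intros t D1 _. apply (dvd_unit _ _ (mone H) D1). exists (mone H). apply mop_one.
  - now apply coprime_mul.
Qed.

Lemma half (H : CCMonoid) (HG : gcd_monoid H) (a b c d e u : H) (m : nat)
  (Hd : squarefree d) (Hcd : rel_prime c d)
  (He1 : mdvd (mop H e e) a) (He2 : mdvd a (mpow e m))
  (Hu : is_unit u) (E : mop H a b = mop H u (mop H c d)) : mdvd a c.
Proof.
  assert (Rad : rel_prime a d).
  { intros t T1 T2.
    assert (Rte : rel_prime t e).
    { intros s S1 S2.
      assert (Sd : mdvd s d) by exact (dvd_trans _ _ _ _ S1 T2).
      assert (Rsc : rel_prime s c).
      { intros r R1 R2. apply Hcd; [exact R2 | exact (dvd_trans _ _ _ _ R1 Sd)]. }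
      assert (Rssc : rel_prime (mop H s s) c) by (apply coprime_mul; assumption).
      assert (Ssa : mdvd (mop H s s) (mop H c (mop H u d))).
      { apply (dvd_trans _ _ (mop H a b)).
        - apply dvd_mulr. apply (dvd_trans _ _ (mop H e e)); [apply dvd_mul2; exact S2 | exact He1].
        - rewrite E. exists (mone H). rewrite op1r, !mop_assoc. f_equal. apply mop_comm. }
      pose proof (euclid H HG _ _ _ Rssc Ssa) as Ssd.
      rewrite (mop_comm H u d) in Ssd. apply dvd_unit_r in Ssd; [| exact Hu].
      destruct Ssd as [k Ek].
      destruct (Classical_Prop.classic (is_unit s)) as [Y|N]; [exact Y|].
      exfalso. apply Hd. exists s, k. split; assumption. }
    assert (Rtm : rel_prime t (mpow e m)).
    { apply rel_prime_sym, coprime_pow, rel_prime_sym; assumption. }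
    apply Rtm; [apply dvd_refl | exact (dvd_trans _ _ _ _ T1 He2)]. }
  assert (D : mdvd a (mop H d (mop H u c))).
  { exists b. rewrite E. rewrite (mop_comm H d). rewrite <- mop_assoc. reflexivity. }
  pose proof (euclid H HG _ _ _ Rad D) as D2.
  rewrite mop_comm in D2. exact (dvd_unit_r _ _ _ _ D2 Hu).
Qed.

Theorem proposition5p2 (H : CCMonoid) (HG : gcd_monoid H)
  (a b c d : H)
  (Hb : squarefree b) (Hd : squarefree d)
  (Hab : rel_prime a b) (Hcd : rel_prime c d)
  (Hex : exists (e f : H) (m n : nat),
      squarefree e /\ squarefree f /\ 1 <= m /\ 1 <= n /\
      mdvd (mop H e e) a /\ mdvd a (mpow e m) /\
      mdvd (mop H f f) c /\ mdvd c (mpow f n))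
  (Hassoc : massoc (mop H a b) (mop H c d)) :
  massoc a c /\ massoc b d.
Proof.
  destruct Hex as (e & f & m & n & _ & _ & _ & _ & He1 & He2 & Hf1 & Hf2).
  destruct Hassoc as (u & Uu & E).
  destruct Uu as [u' Hu'].
  assert (Uu : is_unit u) by (exists u'; exact Hu').
  assert (Uu' : is_unit u') by (exists u; rewrite mop_comm; exact Hu').
  assert (E' : mop H c d = mop H u' (mop H a b)).
  { rewrite E, mop_assoc, (mop_comm H u' u), Hu', mop_one. reflexivity. }
  pose proof (half H HG a b c d e u m Hd Hcd He1 He2 Uu E) as [l Hl].
  pose proof (half H HG c d a b f u' n Hb Hab Hf1 Hf2 Uu' E') as [k Hk].
  assert (Ulk : mop H l k = mone H).
  { apply (mop_cancel H a). rewrite op1r, mop_assoc, <- Hl. symmetry; exact Hk. }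
  assert (Uk : is_unit k) by (exists l; rewrite mop_comm; exact Ulk).
  assert (Ak : a = mop H k c) by (rewrite mop_comm; exact Hk).
  split.
  - exists k. split; assumption.
  - exists (mop H l u). split; [now apply unit_mul; [exists k|]|].
    assert (Ekb : mop H k b = mop H u d).
    { apply (mop_cancel H c).
      rewrite !mop_assoc, (mop_comm H c k), <- Ak, E, !mop_assoc, (mop_comm H c u).
      reflexivity. }
    rewrite <- mop_assoc, <- Ekb, mop_assoc, Ulk, mop_one. reflexivity.
Qed.
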